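(* Let $\mathcal{X}=\{1,\dots,n\}$, let $\pi$ be a strictly positive probability distribution on $\mathcal{X}$, let $P$ be a $\pi$-reversible transition matrix and let $\alpha\in[0,1]$. For every $S\subset\mathcal{X}$ with $S\neq\emptyset,\mathcal{X}$, $$\|A_\alpha(S)-\Pi\|_{F,\pi}^2=\alpha^2\operatorname{Tr}(P^2)-2\alpha(1-\alpha)g(S)+1-2\alpha^2=F_1(S)-F_2(S),$$ where $$F_1(S)=2\alpha(1-\alpha)\Big(\frac{1}{\pi(S)}\sum_{x,y\in S'}\pi(x)P(x,y)+\frac{1}{\pi(S')}\sum_{x,y\in S}\pi(x)P(x,y)\Big),$$ $$F_2(S)=\frac{2\alpha(1-\alpha)}{\pi(S)\pi(S')}+6\alpha^2-4\alpha-1-\alpha^2\operatorname{Tr}(P^2),$$ and both $F_1$ and $F_2$ are supermodular on $\{S\subseteq\mathcal{X}:0<\pi(S)<1\}$.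
   Context: $S'=\mathcal{X}\setminus S$; $g(S)=\frac{1}{\pi(S)\pi(S')}\sum_{x\in S,\,y\in S'}\pi(x)P(x,y)$. $\pi$-reversible means $\pi(x)P(x,y)=\pi(y)P(y,x)$. $A_\alpha(S)=\alpha P+(1-\alpha)G_S$ where $G_S(x,y)=\pi(y)/\pi(\mathcal{O}(x))$ if $y\in\mathcal{O}(x)$ and $0$ otherwise, $\mathcal{O}(x)\in\{S,S'\}$ the block containing $x$. $\Pi$ is the matrix with every row equal to $\pi$; $\|M\|_{F,\pi}^2=\operatorname{Tr}(M^*M)$ with $M^*(x,y)=\pi(y)M(y,x)/\pi(x)$. A set function $f$ is supermodular if $f(A\cap B)+f(A\cup B)\ge f(A)+f(B)$. *)

(* Defs.v *)
From HB Require Import structures.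
From mathcomp Require Import all_boot all_order all_algebra.
Set Implicit Arguments. Unset Strict Implicit. Unset Printing Implicit Defensive.
Import Order.TTheory GRing.Theory Num.Theory.
Local Open Scope ring_scope.

Section Defs.
Variables (R : realFieldType) (n : nat).

Definition prob_pos (pi : 'I_n -> R) : Prop :=
  (forall x, 0 < pi x) /\ \sum_(x < n) pi x = 1.

Definition transition (P : 'M[R]_n) : Prop :=
  (forall x y, 0 <= P x y) /\ (forall x, \sum_(y < n) P x y = 1).

Definition reversible (pi : 'I_n -> R) (P : 'M[R]_n) : Prop :=
  forall x y, pi x * P x y = pi y * P y x.

Definition piS (pi : 'I_n -> R) (S : {set 'I_n}) : R := \sum_(x in S) pi x.

Definition flow (pi : 'I_n -> R) (P : 'M[R]_n) (A B : {set 'I_n}) : R :=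
  \sum_(x in A) \sum_(y in B) pi x * P x y.

Definition gS (pi : 'I_n -> R) (P : 'M[R]_n) (S : {set 'I_n}) : R :=
  (piS pi S * piS pi (~: S))^-1 * flow pi P S (~: S).

Definition block (S : {set 'I_n}) (x : 'I_n) : {set 'I_n} :=
  if x \in S then S else ~: S.

Definition GS (pi : 'I_n -> R) (S : {set 'I_n}) : 'M[R]_n :=
  \matrix_(x, y) (if y \in block S x then pi y / piS pi (block S x) else 0).

Definition Aalpha (pi : 'I_n -> R) (P : 'M[R]_n) (alpha : R) (S : {set 'I_n})
  : 'M[R]_n := alpha *: P + (1 - alpha) *: GS pi S.

Definition PiM (pi : 'I_n -> R) : 'M[R]_n := \matrix_(x, y) pi y.

(* adjoint in L^2(pi): M^*(x,y) = pi(y) M(y,x) / pi(x) *)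
Definition adjpi (pi : 'I_n -> R) (M : 'M[R]_n) : 'M[R]_n :=
  \matrix_(x, y) (pi y * M y x / pi x).

Definition frob2 (pi : 'I_n -> R) (M : 'M[R]_n) : R := \tr (adjpi pi M *m M).

Definition F1 (pi : 'I_n -> R) (P : 'M[R]_n) (alpha : R) (S : {set 'I_n}) : R :=
  2 * alpha * (1 - alpha) *
  ((piS pi S)^-1 * flow pi P (~: S) (~: S) + (piS pi (~: S))^-1 * flow pi P S S).

Definition F2 (pi : 'I_n -> R) (P : 'M[R]_n) (alpha : R) (S : {set 'I_n}) : R :=
  2 * alpha * (1 - alpha) / (piS pi S * piS pi (~: S))
  + 6 * alpha ^+ 2 - 4 * alpha - 1 - alpha ^+ 2 * \tr (P *m P).

Definition in_fam (pi : 'I_n -> R) (S : {set 'I_n}) : Prop :=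
  0 < piS pi S < 1.

Definition supermodular_on (pi : 'I_n -> R) (f : {set 'I_n} -> R) : Prop :=
  forall A B : {set 'I_n},
    in_fam pi A -> in_fam pi B -> in_fam pi (A :&: B) -> in_fam pi (A :|: B) ->
    f A + f B <= f (A :&: B) + f (A :|: B).

End Defs.

(* Main.v *)
Require Import Defs.
From HB Require Import structures.
From mathcomp Require Import all_boot all_order all_algebra.
From mathcomp Require Import ring lra.
Import Order.TTheory GRing.Theory Num.Theory.
Set Implicit Arguments. Unset Strict Implicit.
Local Open Scope ring_scope.

Lemma sum_splitS (R : realFieldType) n (S : {set 'I_n}) (F : 'I_n -> R) :
  \sum_x F x = \sum_(x in S) F x + \sum_(x in ~: S) F x.
Proof.
rewrite (bigID (fun x => x \in S)) /=; congr (_ + _).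
by apply: eq_bigl => x; rewrite in_setC.
Qed.

Lemma piSE (R : realFieldType) n (pi : 'I_n -> R) S :
  piS pi S = \sum_x (x \in S)%:R * pi x.
Proof.
rewrite /piS big_mkcond /=; apply: eq_bigr => x _.
by case: (x \in S); rewrite ?mul1r ?mul0r.
Qed.

Lemma flowE (R : realFieldType) n (pi : 'I_n -> R) P A B :
  flow pi P A B = \sum_x \sum_y ((x \in A)%:R * (y \in B)%:R) * (pi x * P x y).
Proof.
rewrite /flow big_mkcond /=; apply: eq_bigr => x _.
rewrite big_mkcond /=; case: (x \in A).
  by apply: eq_bigr => y _; case: (y \in B); rewrite ?mul1r ?mul0r ?mulr0.
by rewrite big1 // => y _; case: (y \in B); rewrite ?mul1r ?mul0r ?mulr0.
Qed.

Lemma piC (R : realFieldType) n (pi : 'I_n -> R) S :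
  prob_pos pi -> piS pi (~: S) = 1 - piS pi S.
Proof.
case=> _ h1; rewrite -h1 (sum_splitS S) /piS; ring.
Qed.

Lemma piS_gt0 (R : realFieldType) n (pi : 'I_n -> R) S :
  prob_pos pi -> S != set0 -> 0 < piS pi S.
Proof.
case=> hp _ /set0Pn [x xS]; rewrite /piS (bigD1 x) //=.
apply: (lt_le_trans (hp x)); rewrite lerDl; apply: sumr_ge0 => y _.
exact: ltW.
Qed.

Lemma flow_sym (R : realFieldType) n (pi : 'I_n -> R) P A B :
  reversible pi P -> flow pi P A B = flow pi P B A.
Proof.
move=> hr; rewrite /flow exchange_big; apply: eq_bigr => y _.
by apply: eq_bigr => x _; rewrite hr.
Qed.

Lemma flow_row (R : realFieldType) n (pi : 'I_n -> R) P A B :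
  transition P -> flow pi P A B + flow pi P A (~: B) = piS pi A.
Proof.
case=> _ hs; rewrite /flow -big_split /piS; apply: eq_bigr => x _.
have h := hs x; rewrite (sum_splitS B) in h.
by rewrite -!mulr_sumr /= -mulrDr h mulr1.
Qed.

Lemma frobE (R : realFieldType) n (pi : 'I_n -> R) (M : 'M[R]_n) :
  frob2 pi M = \sum_x \sum_y pi x * M x y ^+ 2 / pi y.
Proof.
rewrite /frob2 /mxtrace exchange_big /=.
apply: eq_bigr => x _; rewrite mxE; apply: eq_bigr => y _.
rewrite !mxE; rewrite expr2; ring.
Qed.

Lemma blockE (R : realFieldType) n (pi : 'I_n -> R) (P : 'M[R]_n) (X Y : {set 'I_n}) a d :
  (forall x, 0 < pi x) ->
  \sum_(x in X) \sum_(y in Y) pi x * (a * P x y + d * pi y) ^+ 2 / pi y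
  = a ^+ 2 * (\sum_(x in X) \sum_(y in Y) pi x * P x y ^+ 2 / pi y)
    + 2 * a * d * flow pi P X Y + d ^+ 2 * (piS pi X * piS pi Y).
Proof.
move=> hp; rewrite /flow /piS mulr_suml !mulr_sumr -!big_split /=.
apply: eq_bigr => x _; rewrite !mulr_sumr -!big_split /=.
apply: eq_bigr => y _; have := hp y; rewrite lt0r => /andP [hy _].
by field.
Qed.

Lemma trE (R : realFieldType) n (pi : 'I_n -> R) (P : 'M[R]_n) :
  (forall x, 0 < pi x) -> reversible pi P ->
  \tr (P *m P) = \sum_x \sum_y pi x * P x y ^+ 2 / pi y.
Proof.
move=> hp hr; rewrite /mxtrace; apply: eq_bigr => x _; rewrite mxE.
apply: eq_bigr => y _; have := hp y; rewrite lt0r => /andP [hy _].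
have -> : P y x = pi x * P x y / pi y.
  by rewrite hr; field.
by field.
Qed.

Lemma part1 (R : realFieldType) (n : nat) (pi : 'I_n -> R)
  (P : 'M[R]_n) (alpha : R) (S : {set 'I_n}) :
  prob_pos pi -> transition P -> reversible pi P ->
  S != set0 -> S != [set: 'I_n] ->
     frob2 pi (Aalpha pi P alpha S - PiM pi)
       = alpha ^+ 2 * \tr (P *m P) - 2 * alpha * (1 - alpha) * gS pi P S
         + 1 - 2 * alpha ^+ 2
     /\ alpha ^+ 2 * \tr (P *m P) - 2 * alpha * (1 - alpha) * gS pi P S
         + 1 - 2 * alpha ^+ 2
       = F1 pi P alpha S - F2 pi P alpha S.
Proof.
move=> hpp htr hr hS0 hST.
have hp := hpp.1.
have p0 : 0 < piS pi S by exact: piS_gt0.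
have p1 : 0 < piS pi (~: S).
  apply: piS_gt0 => //; apply/negP => /eqP h; move/negP: hST; apply.
  by rewrite -(setCK S) h setC0.
have hC := piC S hpp.
have fSS := flow_row pi S S htr.
have fCC := flow_row pi (~: S) S htr.
have fCS := flow_sym (~: S) S hr.
set p := piS pi S in p0 hC fSS *.
set f := flow pi P S (~: S) in fSS fCS *.
set Q := fun X Y : {set 'I_n} =>
  \sum_(x in X) \sum_(y in Y) pi x * P x y ^+ 2 / pi y.
have hQ : \tr (P *m P) = Q S S + Q S (~: S) + Q (~: S) S + Q (~: S) (~: S).
  rewrite (trE hp hr) (sum_splitS S) /Q -addrA.
  by congr (_ + _); rewrite -big_split; apply: eq_bigr => x _;
    exact: sum_splitS.
have eSS : flow pi P S S = p - f by rewrite -fSS; ring.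
have eCC : flow pi P (~: S) (~: S) = piS pi (~: S) - f by rewrite -fCC fCS; ring.
have pn0 : p != 0 by apply/lt0r_neq0.
have pn1 : 1 - p != 0 by rewrite -hC; apply/lt0r_neq0.
split.
  rewrite frobE (sum_splitS S).
  set M := Aalpha pi P alpha S - PiM pi.
  have E1 : \sum_(x in S) \sum_y pi x * M x y ^+ 2 / pi y
    = \sum_(x in S) \sum_(y in S) pi x * (alpha * P x y + ((1 - alpha) / p - 1) * pi y) ^+ 2 / pi y
    + \sum_(x in S) \sum_(y in ~: S) pi x * (alpha * P x y + (-1) * pi y) ^+ 2 / pi y.
    rewrite -big_split; apply: eq_bigr => x xS; rewrite (sum_splitS S) /=.
    congr (_ + _); apply: eq_bigr => y yS.
      rewrite /M /Aalpha /GS /PiM !mxE /block xS yS; congr (_ * _ ^+ 2 / _).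
      by rewrite -/p; ring.
    move: yS; rewrite in_setC => /negbTE yS.
    by rewrite /M /Aalpha /GS /PiM !mxE /block xS yS; congr (_ * _ ^+ 2 / _); ring.
  have E2 : \sum_(x in ~: S) \sum_y pi x * M x y ^+ 2 / pi y
    = \sum_(x in ~: S) \sum_(y in S) pi x * (alpha * P x y + (-1) * pi y) ^+ 2 / pi y
    + \sum_(x in ~: S) \sum_(y in ~: S) pi x * (alpha * P x y + ((1 - alpha) / piS pi (~: S) - 1) * pi y) ^+ 2 / pi y.
    rewrite -big_split; apply: eq_bigr => x xS; rewrite (sum_splitS S) /=.
    have xS' := xS; move: xS'; rewrite in_setC => /negbTE xS'.
    congr (_ + _); apply: eq_bigr => y yS.
      have yS' : (y \in ~: S) = false by rewrite in_setC yS.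
      by rewrite /M /Aalpha /GS /PiM !mxE /block xS' yS'; congr (_ * _ ^+ 2 / _); ring.
    by rewrite /M /Aalpha /GS /PiM !mxE /block xS' yS; congr (_ * _ ^+ 2 / _); field; apply/lt0r_neq0.
  rewrite E1 E2 !blockE // hQ /Q /gS eSS fCS eCC hC -/p -/f.
  by field; rewrite pn0 pn1.
rewrite /gS /F1 /F2 eSS eCC hC -/p -/f.
by field; rewrite pn0 pn1.
Qed.

Lemma L_inv (R : realFieldType) (a b x y : R) :
  0 < a -> a <= x -> a <= y -> x + y = a + b -> x^-1 + y^-1 <= a^-1 + b^-1.
Proof.
move=> a0 ax ay e.
have x0 : 0 < x by exact: lt_le_trans ax.
have y0 : 0 < y by exact: lt_le_trans ay.
have b0 : 0 < b.
  have -> : b = x + y - a by rewrite e; ring.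
  lra.
have -> : b = x + y - a by rewrite e; ring.
rewrite -subr_ge0.
have -> : a^-1 + (x + y - a)^-1 - (x^-1 + y^-1)
   = (x + y) * ((x - a) * (y - a)) / (x * y * a * (x + y - a)).
  field; apply/and4P; split; apply/lt0r_neq0 => //; lra.
apply: divr_ge0; last by apply: mulr_ge0; [apply: mulr_ge0; [apply: mulr_ge0|]|]; lra.
apply: mulr_ge0; [lra | apply: mulr_ge0; lra].
Qed.

Lemma L_prod (R : realFieldType) (f1 f2 fA fB g1 g2 gA gB : R) :
  0 <= f1 -> f1 <= fA -> f1 <= fB -> fA + fB <= f1 + f2 ->
  0 <= g1 -> g1 <= gA -> g1 <= gB -> gA + gB <= g1 + g2 ->
  fA * gA + fB * gB <= f1 * g1 + f2 * g2.
Proof.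
move=> h1 h2 h3 h4 k1 k2 k3 k4.
have H : (fA + fB - f1) * (gA + gB - g1) <= f2 * g2.
  apply: ler_pM; lra.
have H2 : 0 <= (fA - f1) * (gB - g1) + (fB - f1) * (gA - g1).
  apply: addr_ge0; apply: mulr_ge0; lra.
have E : f1 * g1 + (fA + fB - f1) * (gA + gB - g1) - (fA * gA + fB * gB)
  = (fA - f1) * (gB - g1) + (fB - f1) * (gA - g1) by ring.
lra.
Qed.

Lemma piS_mod (R : realFieldType) n (pi : 'I_n -> R) (A B : {set 'I_n}) :
  piS pi (A :&: B) + piS pi (A :|: B) = piS pi A + piS pi B.
Proof.
rewrite !piSE -!big_split; apply: eq_bigr => x _ /=.
rewrite in_setI in_setU; case: (x \in A); case: (x \in B); rewrite /=; ring.
Qed.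

Lemma piS_le (R : realFieldType) n (pi : 'I_n -> R) (A B : {set 'I_n}) :
  (forall x, 0 < pi x) -> A \subset B -> piS pi A <= piS pi B.
Proof.
move=> hp /subsetP sAB; rewrite !piSE; apply: ler_sum => x _.
apply: ler_wpM2r; first exact: ltW.
case xA: (x \in A); first by rewrite (sAB x xA).
by case: (x \in B).
Qed.

Lemma flow_ge0 (R : realFieldType) n (pi : 'I_n -> R) P (A : {set 'I_n}) :
  (forall x, 0 < pi x) -> transition P -> 0 <= flow pi P A A.
Proof.
move=> hp [hP _]; apply: sumr_ge0 => x _; apply: sumr_ge0 => y _.
by apply: mulr_ge0; [exact: ltW|].
Qed.

Lemma flow_le (R : realFieldType) n (pi : 'I_n -> R) P (A B : {set 'I_n}) :
  (forall x, 0 < pi x) -> transition P -> A \subset B ->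
  flow pi P A A <= flow pi P B B.
Proof.
move=> hp [hP _] /subsetP sAB; rewrite !flowE; apply: ler_sum => x _.
apply: ler_sum => y _; apply: ler_wpM2r; first by apply: mulr_ge0; [exact: ltW|].
case xA: (x \in A); case yA: (y \in A); rewrite ?(sAB x xA) ?(sAB y yA) /=;
  case: (x \in B); case: (y \in B); rewrite /=; lra.
Qed.

Lemma flow_sup (R : realFieldType) n (pi : 'I_n -> R) P (A B : {set 'I_n}) :
  (forall x, 0 < pi x) -> transition P ->
  flow pi P A A + flow pi P B B <=
  flow pi P (A :&: B) (A :&: B) + flow pi P (A :|: B) (A :|: B).
Proof.
move=> hp [hP _]; rewrite !flowE -!big_split; apply: ler_sum => x _ /=.
rewrite -!big_split; apply: ler_sum => y _ /=; rewrite -!mulrDl.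
apply: ler_wpM2r; first by apply: mulr_ge0; [exact: ltW|].
rewrite !in_setI !in_setU.
case: (x \in A); case: (x \in B); case: (y \in A); case: (y \in B); rewrite /=; lra.
Qed.

Lemma w_sup (R : realFieldType) n (pi : 'I_n -> R) P (U V : {set 'I_n}) :
  (forall x, 0 < pi x) -> transition P -> piS pi (U :|: V) < 1 ->
  flow pi P U U * (1 - piS pi U)^-1 + flow pi P V V * (1 - piS pi V)^-1 <=
  flow pi P (U :&: V) (U :&: V) * (1 - piS pi (U :&: V))^-1
  + flow pi P (U :|: V) (U :|: V) * (1 - piS pi (U :|: V))^-1.
Proof.
move=> hp htr hb.
have hm := piS_mod pi U V.
have l1 := piS_le hp (subsetIl U V).
have l2 := piS_le hp (subsetIr U V).
have l3 := piS_le hp (subsetUl U V).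
have l4 := piS_le hp (subsetUr U V).
apply: L_prod.
- exact: flow_ge0.
- exact: flow_le (subsetIl U V).
- exact: flow_le (subsetIr U V).
- exact: flow_sup.
- rewrite invr_ge0; lra.
- rewrite lef_pV2 ?posrE; lra.
- rewrite lef_pV2 ?posrE; lra.
- have := @L_inv R (1 - piS pi (U :|: V)) (1 - piS pi (U :&: V))
     (1 - piS pi U) (1 - piS pi V).
  have e : 1 - piS pi U + (1 - piS pi V)
     = 1 - piS pi (U :|: V) + (1 - piS pi (U :&: V)) by lra.
  move=> /(_ ltac:(lra) ltac:(lra) ltac:(lra) e); lra.
Qed.

Lemma F1E (R : realFieldType) n (pi : 'I_n -> R) P alpha (S : {set 'I_n}) :
  prob_pos pi ->
  F1 pi P alpha S = 2 * alpha * (1 - alpha) *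
    (flow pi P (~: S) (~: S) * (1 - piS pi (~: S))^-1
     + flow pi P S S * (1 - piS pi S)^-1).
Proof.
move=> hpp; rewrite /F1.
have -> : (piS pi S)^-1 = (1 - piS pi (~: S))^-1.
  by rewrite (piC S hpp); congr (_^-1); ring.
rewrite (piC S hpp); ring.
Qed.

Theorem corollary4p14 (R : realFieldType) (n : nat) (pi : 'I_n -> R)
  (P : 'M[R]_n) (alpha : R) :
  prob_pos pi -> transition P -> reversible pi P -> 0 <= alpha <= 1 ->
  (forall S : {set 'I_n}, S != set0 -> S != [set: 'I_n] ->
     frob2 pi (Aalpha pi P alpha S - PiM pi)
       = alpha ^+ 2 * \tr (P *m P) - 2 * alpha * (1 - alpha) * gS pi P S
         + 1 - 2 * alpha ^+ 2
     /\ alpha ^+ 2 * \tr (P *m P) - 2 * alpha * (1 - alpha) * gS pi P S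
         + 1 - 2 * alpha ^+ 2
       = F1 pi P alpha S - F2 pi P alpha S)
  /\ supermodular_on pi (F1 pi P alpha)
  /\ supermodular_on pi (F2 pi P alpha).
Proof.
move=> hpp htr hr /andP [a0 a1].
have hp := hpp.1.
have Hc : 0 <= 2 * alpha * (1 - alpha) by apply: mulr_ge0; lra.
split; first by move=> S; exact: part1.
split.
  move=> A B _ _ /andP [i1 i2] /andP [u1 u2].
  rewrite !(F1E P alpha _ hpp).
  have H1 := w_sup (U := A) (V := B) hp htr u2.
  have h2 : piS pi (~: A :|: ~: B) < 1 by rewrite -setCI (piC _ hpp); lra.
  have H2 := w_sup (U := ~: A) (V := ~: B) hp htr h2.
  rewrite -setCI -setCU in H2.
  have key := ler_wpM2l Hc (lerD H1 H2).
  lra.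
move=> A B hA hB hI hU.
move/andP: (hA) => [x1 x2]; move/andP: (hB) => [y1 y2].
move/andP: (hI) => [i1 i2]; move/andP: (hU) => [u1 u2].
have hm := piS_mod pi A B.
have phiE : forall t : R, 0 < t < 1 -> (t * (1 - t))^-1 = t^-1 + (1 - t)^-1.
  move=> t /andP [t0 t1]; field; apply/andP; split; apply/lt0r_neq0; lra.
rewrite /F2 !(piC _ hpp) (phiE _ hA) (phiE _ hB) (phiE _ hI) (phiE _ hU).
have l1 := piS_le hp (subsetIl A B).
have l2 := piS_le hp (subsetIr A B).
have L1 := L_inv i1 l1 l2 (esym hm).
have L2 := @L_inv R (1 - piS pi (A :|: B)) (1 - piS pi (A :&: B))
     (1 - piS pi A) (1 - piS pi B).
have e : 1 - piS pi A + (1 - piS pi B)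
     = 1 - piS pi (A :|: B) + (1 - piS pi (A :&: B)) by lra.
move: L2 => /(_ ltac:(lra) ltac:(lra) ltac:(lra) e) L2.
have key := ler_wpM2l Hc (lerD L1 L2).
lra.
Qed.
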